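(* Let $p\in\mathbb{C}$. Suppose that \[ e^{pz}K(\sqrt z)=\frac\pi2\sum_{n=0}^\infty u_nz^n,\qquad |z|<1. \] Then $u_0=1$, $u_1=\frac14(4p+1)$, $u_2=\frac1{64}(32p^2+16p+9)$, and for all integers $n\ge2$, \[ u_{n+1}=\frac{(2n+1)(2n+4p+1)}{4(n+1)^2}u_n-\frac{p(2n+p)}{(n+1)^2}u_{n-1}+\frac{p^2}{(n+1)^2}u_{n-2}. \]
   Context: $K$ denotes the complete elliptic integral of the first kind, $K(r)=\int_0^{\pi/2}\frac{dt}{\sqrt{1-r^2\sin^2t}}$; for complex $|z|<1$, $K(\sqrt z)$ is understood as $\frac\pi2F(\tfrac12,\tfrac12;1;z)$, where $F(a,b;c;z)=\sum_{n=0}^\infty\frac{(a)_n(b)_n}{(c)_n\,n!}z^n$ is the Gaussian hypergeometric function and $(a)_n=a(a+1)\cdots(a+n-1)$, $(a)_0=1$. *)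

(* Defs.v *)
From Stdlib Require Import Reals Arith Factorial.
From Coquelicot Require Export Coquelicot.
Open Scope C_scope.

Definition Cexp (z : C) : C :=
  (exp (fst z) * cos (snd z), exp (fst z) * sin (snd z))%R.

(* Sum of a complex series, taken componentwise (total operator; equals the
   actual sum whenever the series converges). *)
Definition CSeries (a : nat -> C) : C :=
  (Series (fun n => fst (a n)), Series (fun n => snd (a n))).

Fixpoint poch (a : C) (n : nat) : C :=
  match n with
  | O => 1
  | S m => poch a m * (a + INR m)
  end.

Definition hyp2F1 (a b c z : C) : C :=
  CSeries (fun n => poch a n * poch b n / (poch c n * INR (fact n)) * z ^ n).

Definition Ksqrt (z : C) : C := (PI / 2)%R * hyp2F1 (1/2) (1/2) 1 z.

(* Main.v *)
Require Import Defs.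
From Stdlib Require Import Reals Lra Lia Factorial.
From Coquelicot Require Import Coquelicot.
Open Scope C_scope.

Definition Val (s : nat -> C) (t : R) : C :=
  (PSeries (fun n => fst (s n)) t, PSeries (fun n => snd (s n)) t).
Definition Dc (s : nat -> C) : nat -> C := fun n => RtoC (INR (S n)) * s (S n).
Definition Tc (s : nat -> C) : nat -> C :=
  fun n => match n with O => 0 | S k => s k end.
Definition lin (a : C) (x : nat -> C) (b : C) (y : nat -> C) : nat -> C :=
  fun n => a * x n + b * y n.
Definition Rad (s : nat -> C) :=
  Rbar_le (Finite (1/2)) (CV_radius (fun n => fst (s n))) /\
  Rbar_le (Finite (1/2)) (CV_radius (fun n => snd (s n))).

Lemma rad_scal (c : R) a : Rbar_le (CV_radius a) (CV_radius (PS_scal c a)).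
Proof.
  destruct (Req_dec c 0) as [->|Hc].
  - rewrite (CV_radius_ext (PS_scal 0%R a) (fun _ => 0%R)).
    + rewrite CV_radius_const_0. destruct (CV_radius a); simpl; auto.
    + intros n. unfold PS_scal. simpl. change (mult 0%R (a n) = 0%R). unfold mult; simpl; ring.
  - rewrite CV_radius_scal; auto. apply Rbar_le_refl.
Qed.

Lemma rad_lin2 (r c1 c2 : R) x y :
  Rbar_le r (CV_radius x) -> Rbar_le r (CV_radius y) ->
  Rbar_le r (CV_radius (fun n => c1 * x n + c2 * y n)%R).
Proof.
  intros Hx Hy.
  rewrite (CV_radius_ext _ (PS_plus (PS_scal c1 x) (PS_scal c2 y))).
  2:{ intros n. reflexivity. }
  eapply Rbar_le_trans. 2: apply CV_radius_plus.
  apply Rbar_min_case.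
  - eapply Rbar_le_trans; [exact Hx| apply rad_scal].
  - eapply Rbar_le_trans; [exact Hy| apply rad_scal].
Qed.

Lemma Rad_lin a x b y : Rad x -> Rad y -> Rad (lin a x b y).
Proof.
  intros [Hx1 Hx2] [Hy1 Hy2]; split.
  - rewrite (CV_radius_ext _ (fun n => 1 * ((fst a) * fst (x n) + (- snd a) * snd (x n))
        + 1 * ((fst b) * fst (y n) + (- snd b) * snd (y n)))%R).
    2:{ intros n; unfold lin; simpl; ring. }
    apply rad_lin2; apply rad_lin2; auto.
  - rewrite (CV_radius_ext _ (fun n => 1 * ((fst a) * snd (x n) + (snd a) * fst (x n))
        + 1 * ((fst b) * snd (y n) + (snd b) * fst (y n)))%R).
    2:{ intros n; unfold lin; simpl; ring. }
    apply rad_lin2; apply rad_lin2; auto.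
Qed.

Lemma Rad_D s : Rad s -> Rad (Dc s).
Proof.
  intros [H1 H2]; split.
  - rewrite (CV_radius_ext _ (PS_derive (fun n => fst (s n)))).
    2:{ intros n; unfold Dc, PS_derive; simpl; ring. }
    rewrite CV_radius_derive; auto.
  - rewrite (CV_radius_ext _ (PS_derive (fun n => snd (s n)))).
    2:{ intros n; unfold Dc, PS_derive; simpl; ring. }
    rewrite CV_radius_derive; auto.
Qed.

Lemma Rad_T s : Rad s -> Rad (Tc s).
Proof.
  intros [H1 H2]; split.
  - rewrite (CV_radius_ext _ (PS_incr_1 (fun n => fst (s n)))).
    2:{ intros [|n]; reflexivity. }
    rewrite CV_radius_incr_1; auto.
  - rewrite (CV_radius_ext _ (PS_incr_1 (fun n => snd (s n)))).
    2:{ intros [|n]; reflexivity. }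
    rewrite CV_radius_incr_1; auto.
Qed.

Lemma rad_in a t : Rbar_le (Finite (1/2)) (CV_radius a) -> (Rabs t < 1/2)%R ->
  Rbar_lt (Rabs t) (CV_radius a).
Proof. intros H Ht. eapply Rbar_lt_le_trans; [|exact H]. exact Ht. Qed.

Lemma PSeries_lin2 (c1 c2 : R) x y t :
  ex_pseries x t -> ex_pseries y t ->
  PSeries (fun n => c1 * x n + c2 * y n)%R t = (c1 * PSeries x t + c2 * PSeries y t)%R.
Proof.
  intros Hx Hy.
  rewrite (PSeries_ext _ (PS_plus (PS_scal c1 x) (PS_scal c2 y))).
  2:{ intros n; reflexivity. }
  rewrite PSeries_plus.
  - rewrite !PSeries_scal. reflexivity.
  - apply ex_pseries_scal; auto. apply Rmult_comm.
  - apply ex_pseries_scal; auto. apply Rmult_comm.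
Qed.

Lemma ex_pseries_lin2 (c1 c2 : R) x y t :
  ex_pseries x t -> ex_pseries y t ->
  ex_pseries (fun n => c1 * x n + c2 * y n)%R t.
Proof.
  intros Hx Hy.
  apply (ex_pseries_ext (PS_plus (PS_scal c1 x) (PS_scal c2 y))).
  { intros n; reflexivity. }
  apply ex_pseries_plus; apply ex_pseries_scal; auto; apply Rmult_comm.
Qed.

Lemma Val_lin a x b y t : Rad x -> Rad y -> (Rabs t < 1/2)%R ->
  Val (lin a x b y) t = a * Val x t + b * Val y t.
Proof.
  intros [Hx1 Hx2] [Hy1 Hy2] Ht.
  assert (E1 := CV_radius_inside _ _ (rad_in _ _ Hx1 Ht)).
  assert (E2 := CV_radius_inside _ _ (rad_in _ _ Hx2 Ht)).
  assert (E3 := CV_radius_inside _ _ (rad_in _ _ Hy1 Ht)).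
  assert (E4 := CV_radius_inside _ _ (rad_in _ _ Hy2 Ht)).
  unfold Val; apply injective_projections; simpl.
  - rewrite (PSeries_ext _ (fun n => 1 * ((fst a) * fst (x n) + (- snd a) * snd (x n))
        + 1 * ((fst b) * fst (y n) + (- snd b) * snd (y n)))%R).
    2:{ intros n; unfold lin; simpl; ring. }
    rewrite PSeries_lin2 by (apply ex_pseries_lin2; auto).
    rewrite !PSeries_lin2 by auto. ring.
  - rewrite (PSeries_ext _ (fun n => 1 * ((fst a) * snd (x n) + (snd a) * fst (x n))
        + 1 * ((fst b) * snd (y n) + (snd b) * fst (y n)))%R).
    2:{ intros n; unfold lin; simpl; ring. }
    rewrite PSeries_lin2 by (apply ex_pseries_lin2; auto).
    rewrite !PSeries_lin2 by auto. ring.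
Qed.

Lemma Val_T s t : Val (Tc s) t = RtoC t * Val s t.
Proof.
  unfold Val; apply injective_projections; simpl.
  - rewrite (PSeries_ext _ (PS_incr_1 (fun n => fst (s n)))).
    2:{ intros [|n]; reflexivity. }
    rewrite PSeries_incr_1. ring.
  - rewrite (PSeries_ext _ (PS_incr_1 (fun n => snd (s n)))).
    2:{ intros [|n]; reflexivity. }
    rewrite PSeries_incr_1. ring.
Qed.

Lemma Val_0 s : Val s 0 = s O.
Proof. unfold Val. rewrite !PSeries_0. destruct (s O); reflexivity. Qed.

Definition cder (f : R -> C) (t : R) (l : C) :=
  is_derive (fun x => fst (f x)) t (fst l) /\ is_derive (fun x => snd (f x)) t (snd l).

Lemma Val_der s t : Rad s -> (Rabs t < 1/2)%R -> cder (Val s) t (Val (Dc s) t).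
Proof.
  intros [H1 H2] Ht; split; simpl.
  - rewrite (PSeries_ext _ (PS_derive (fun n => fst (s n)))).
    2:{ intros n; unfold Dc, PS_derive; simpl; ring. }
    apply is_derive_PSeries. apply rad_in; auto.
  - rewrite (PSeries_ext _ (PS_derive (fun n => snd (s n)))).
    2:{ intros n; unfold Dc, PS_derive; simpl; ring. }
    apply is_derive_PSeries. apply rad_in; auto.
Qed.

Lemma Rder_mult (f g : R -> R) t df dg :
  is_derive f t df -> is_derive g t dg ->
  is_derive (fun x => f x * g x)%R t (df * g t + f t * dg)%R.
Proof.
  intros. apply (is_derive_mult f g); auto. intros; apply Rmult_comm.
Qed.

Lemma cder_mult f g t lf lg : cder f t lf -> cder g t lg ->
  cder (fun x => f x * g x) t (lf * g t + f t * lg).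
Proof.
  intros [F1 F2] [G1 G2]; split; simpl.
  - eapply is_derive_ext. { intros x. reflexivity. }
    assert (A := Rder_mult _ _ _ _ _ F1 G1).
    assert (B := Rder_mult _ _ _ _ _ F2 G2).
    assert (Cc := is_derive_minus _ _ _ _ _ A B).
    eapply is_derive_ext in Cc.
    2:{ intros x. unfold minus, plus, opp; simpl. reflexivity. }
    replace (fst lf * fst (g t) - snd lf * snd (g t) + (fst (f t) * fst lg - snd (f t) * snd lg))%R
      with (minus (fst lf * fst (g t) + fst (f t) * fst lg) (snd lf * snd (g t) + snd (f t) * snd lg))%R.
    2:{ unfold minus, plus, opp; simpl; ring. }
    exact Cc.
  - assert (A := Rder_mult _ _ _ _ _ F1 G2).
    assert (B := Rder_mult _ _ _ _ _ F2 G1).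
    assert (Cc := is_derive_plus _ _ _ _ _ A B).
    eapply is_derive_ext in Cc.
    2:{ intros x. unfold plus; simpl. reflexivity. }
    replace (fst lf * snd (g t) + snd lf * fst (g t) + (fst (f t) * snd lg + snd (f t) * fst lg))%R
      with (plus (fst lf * snd (g t) + fst (f t) * snd lg) (snd lf * fst (g t) + snd (f t) * fst lg))%R.
    2:{ unfold plus; simpl; ring. }
    exact Cc.
Qed.

Definition E (p : C) (t : R) : C := Cexp (p * RtoC t).

Lemma cder_E p t : cder (E p) t (p * E p t).
Proof.
  unfold E, Cexp; split; simpl.
  - auto_derive; auto. unfold Rminus; ring.
  - auto_derive; auto. unfold Rminus; ring.
Qed.

Lemma cder_unique f g t l1 l2 : cder f t l1 -> cder g t l2 ->
  locally t (fun x => f x = g x) -> l1 = l2.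
Proof.
  intros [F1 F2] [G1 G2] Hl.
  assert (Hl1 : locally t (fun x => fst (f x) = fst (g x))).
  { eapply filter_imp; [|exact Hl]. intros x ->; reflexivity. }
  assert (Hl2 : locally t (fun x => snd (f x) = snd (g x))).
  { eapply filter_imp; [|exact Hl]. intros x ->; reflexivity. }
  apply (is_derive_ext_loc _ _ _ _ Hl1) in F1.
  apply (is_derive_ext_loc _ _ _ _ Hl2) in F2.
  apply is_derive_unique in F1, F2, G1, G2.
  apply injective_projections; [rewrite <- F1, <- G1 | rewrite <- F2, <- G2]; reflexivity.
Qed.

Opaque Dc Tc lin Val Rad.

Definition Vs (p : C) (s : nat -> C) : nat -> C := lin 1 (Dc s) (-p) s.
Definition Ws (p : C) (s : nat -> C) : nat -> C := Vs p (Vs p s).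
Definition Mseq (p : C) (s : nat -> C) : nat -> C :=
  lin 1 (lin 1 (Tc (Ws p s)) (-1) (Tc (Tc (Ws p s))))
      1 (lin 1 (lin 1 (Vs p s) (-2) (Tc (Vs p s))) (-(1/4)) s).

Ltac radt := unfold Mseq, Ws, Vs; repeat (apply Rad_lin || apply Rad_D || apply Rad_T); auto.

Lemma locball (P : R -> Prop) t : (Rabs t < 1/2)%R ->
  (forall x, (Rabs x < 1/2)%R -> P x) -> locally t P.
Proof.
  intros Ht H.
  assert (He : (0 < 1/2 - Rabs t)%R) by lra.
  exists (mkposreal _ He). intros x Hx. apply H.
  unfold ball in Hx; simpl in Hx. unfold AbsRing_ball, abs, minus, plus, opp in Hx; simpl in Hx.
  assert (Rabs x <= Rabs (x - t) + Rabs t)%R.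
  { replace x with ((x - t) + t)%R at 1 by ring. apply Rabs_triang. }
  unfold Rminus in *. lra.
Qed.

Lemma key_dummy : True. Proof. exact I. Qed.
Lemma key p s r : Rad s -> Rad r ->
  (forall t, (Rabs t < 1/2)%R -> Val s t = E p t * Val r t) ->
  forall t, (Rabs t < 1/2)%R -> Val (Vs p s) t = E p t * Val (Vs 0 r) t.
Proof.
  intros Hs Hr H t Ht. unfold Vs.
  rewrite !Val_lin by (radt).
  assert (d1 := Val_der s t Hs Ht).
  assert (d2 := cder_mult _ _ t _ _ (cder_E p t) (Val_der r t Hr Ht)).
  assert (eq := cder_unique _ _ _ _ _ d1 d2 (locball _ t Ht H)).
  rewrite eq, (H t Ht). ring.
Qed.

Lemma main_rel p u r : Rad u -> Rad r ->
  (forall t, (Rabs t < 1/2)%R -> Val u t = E p t * Val r t) ->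
  forall t, (Rabs t < 1/2)%R -> Val (Mseq p u) t = E p t * Val (Mseq 0 r) t.
Proof.
  intros Hu Hr H.
  assert (V1 := key p u r Hu Hr H).
  assert (W1 := key p (Vs p u) (Vs 0 r) ltac:(radt) ltac:(radt) V1).
  intros t Ht.
  unfold Mseq. rewrite !Val_lin by radt. rewrite !Val_T.
  rewrite ?Val_lin by radt. rewrite ?Val_T.
  unfold Ws. rewrite (W1 t Ht), (V1 t Ht), (H t Ht). ring.
Qed.

Transparent Val.

Definition ac (n : nat) : C :=
  poch (1/2) n * poch (1/2) n / (poch 1 n * INR (fact n)).

Lemma INRS k : RtoC (INR (S k)) = RtoC (INR k) + 1.
Proof. rewrite S_INR, RtoC_plus. reflexivity. Qed.
Lemma INR0C : RtoC (INR 0) = 0.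
Proof. reflexivity. Qed.

Lemma poch1 n : poch 1 n = RtoC (INR (fact n)).
Proof.
  induction n as [|n IH]; [reflexivity|].
  cbn [poch]. rewrite IH. rewrite fact_simpl, mult_INR, RtoC_mult, INRS.
  ring.
Qed.

Lemma fact_nz n : RtoC (INR (fact n)) <> 0.
Proof.
  intro H. apply (f_equal fst) in H. simpl in H. apply (INR_fact_neq_0 n). exact H.
Qed.

Ltac cnz := let H := fresh in intro H; apply (f_equal fst) in H; simpl in H; nra.

Lemma ac_S n : ac (S n) = ac n * ((2 * RtoC (INR n) + 1) / (2 * RtoC (INR n) + 2)) ^ 2.
Proof.
  unfold ac. cbn [poch]. rewrite !poch1. rewrite fact_simpl, mult_INR, RtoC_mult, INRS.
  pose proof (fact_nz n). pose proof (pos_INR n).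
  field. repeat split; auto; cnz.
Qed.

Lemma ac_0 : ac 0 = 1.
Proof. unfold ac. simpl. field. Qed.

Fixpoint ar (n : nat) : R :=
  match n with O => 1%R | S m => (ar m * ((2 * INR m + 1) / (2 * INR m + 2)) ^ 2)%R end.

Lemma ar_bnd n : (0 <= ar n <= 1)%R.
Proof.
  induction n as [|n IH]; simpl; [lra|].
  pose proof (pos_INR n).
  assert (0 <= (2 * INR n + 1) / (2 * INR n + 2) <= 1)%R.
  { split. apply Rdiv_le_0_compat; lra. apply Rmult_le_reg_r with (2 * INR n + 2)%R; [lra|].
    unfold Rdiv; rewrite Rmult_assoc, Rinv_l by lra; lra. }
  set (q := ((2 * INR n + 1) / (2 * INR n + 2))%R) in *.
  assert (0 <= q^2 <= 1)%R by (simpl; nra).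
  split; nra.
Qed.

Lemma ac_real n : ac n = RtoC (ar n).
Proof.
  induction n as [|n IH]; [apply ac_0|].
  rewrite ac_S, IH. change (ar (S n)) with (ar n * ((2 * INR n + 1) / (2 * INR n + 2)) ^ 2)%R. pose proof (pos_INR n).
  rewrite RtoC_mult, RtoC_pow, RtoC_div by lra.
  rewrite !RtoC_plus, !RtoC_mult. reflexivity.
Qed.

Lemma Rad_ac : Rad ac.
Proof.
  split.
  - destruct (CV_radius_bounded (fun n => fst (ac n))) as [Hub _].
    apply Hub. exists 1%R. intros n. rewrite ac_real. simpl.
    destruct (ar_bnd n).
    assert (0 <= (1/2) ^ n <= 1)%R.
    { split. apply pow_le; lra. clear. induction n; simpl; [lra|].
      assert (0 <= (1/2)^n)%R by (apply pow_le; lra). nra. }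
    rewrite Rabs_pos_eq by nra. nra.
  - rewrite (CV_radius_ext _ (fun _ => 0%R)).
    + rewrite CV_radius_const_0. simpl. auto.
    + intros n. rewrite ac_real. reflexivity.
Qed.

Lemma Mseq0_ac n : Mseq 0 ac n = 0.
Proof.
  destruct n as [|[|m]]; cbv beta iota delta [Mseq Ws Vs lin Tc Dc].
  - rewrite !ac_S, ac_0, !INRS, INR0C. field.
  - rewrite !ac_S, ac_0, !INRS, INR0C. field.
  - rewrite !ac_S, !INRS. pose proof (pos_INR m). field. repeat split; cnz.
Qed.

Opaque Dc Tc lin Rad.

Lemma C_lim_fst {T} (F : (T -> Prop) -> Prop) (f : T -> C) l :
  filterlim f F (locally l) -> filterlim (fun x => fst (f x)) F (locally (fst l)).
Proof.
  intros H P [eps HP]. unfold filtermap. apply (H (fun y => P (fst y))) || apply (H (fun y => P (snd y))). exists eps. intros y [Hy _]. apply HP. exact Hy.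
Qed.
Lemma C_lim_snd {T} (F : (T -> Prop) -> Prop) (f : T -> C) l :
  filterlim f F (locally l) -> filterlim (fun x => snd (f x)) F (locally (snd l)).
Proof.
  intros H P [eps HP]. unfold filtermap. apply (H (fun y => P (fst y))) || apply (H (fun y => P (snd y))). exists eps. intros y [_ Hy]. apply HP. exact Hy.
Qed.

Lemma sum_n_fst (a : nat -> C) n :
  fst (@sum_n C_AbelianMonoid a n) = sum_n (fun k => fst (a k)) n.
Proof.
  induction n as [|n IH].
  - rewrite !sum_O. reflexivity.
  - rewrite !sum_Sn. simpl. rewrite <- IH. reflexivity.
Qed.
Lemma sum_n_snd (a : nat -> C) n :
  snd (@sum_n C_AbelianMonoid a n) = sum_n (fun k => snd (a k)) n.
Proof.
  induction n as [|n IH].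
  - rewrite !sum_O. reflexivity.
  - rewrite !sum_Sn. simpl. rewrite <- IH. reflexivity.
Qed.

Lemma is_series_fst (a : nat -> C) l :
  is_series (V := C_NormedModule) a l -> is_series (fun n => fst (a n)) (fst l).
Proof.
  intros H. unfold is_series in *.
  eapply filterlim_ext. { intros n. apply sum_n_fst. }
  apply (C_lim_fst _ _ _ H).
Qed.
Lemma is_series_snd (a : nat -> C) l :
  is_series (V := C_NormedModule) a l -> is_series (fun n => snd (a n)) (snd l).
Proof.
  intros H. unfold is_series in *.
  eapply filterlim_ext. { intros n. apply sum_n_snd. }
  apply (C_lim_snd _ _ _ H).
Qed.

Definition Hyp (p : C) (u : nat -> C) :=
  forall z : C, (Cmod z < 1)%R ->
     exists s : C,
       is_series (V := C_NormedModule) (fun n => u n * z ^ n) s /\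
       Cexp (p * z) * Ksqrt z = (PI / 2)%R * s.

Lemma hyp_t p u t : Hyp p u -> (Rabs t < 1)%R ->
  Val u t = E p t * Val ac t /\
  ex_series (fun n => fst (u n) * t ^ n)%R /\ ex_series (fun n => snd (u n) * t ^ n)%R.
Proof.
  intros H Ht.
  destruct (H (RtoC t)) as [s [Hs Heq]]. { rewrite Cmod_R. exact Ht. }
  assert (H1 : is_series (fun n => fst (u n) * t ^ n)%R (fst s)).
  { eapply is_series_ext. 2: apply (is_series_fst _ _ Hs).
    intros n. simpl. rewrite <- RtoC_pow. simpl. ring. }
  assert (H2 : is_series (fun n => snd (u n) * t ^ n)%R (snd s)).
  { eapply is_series_ext. 2: apply (is_series_snd _ _ Hs).
    intros n. simpl. rewrite <- RtoC_pow. simpl. ring. }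
  assert (Hv : Val u t = s).
  { unfold Val, PSeries. rewrite (is_series_unique _ _ H1), (is_series_unique _ _ H2).
    destruct s; reflexivity. }
  assert (Hh : hyp2F1 (1/2) (1/2) 1 (RtoC t) = Val ac t).
  { unfold hyp2F1, CSeries, Val, PSeries. f_equal; apply Series_ext; intro n;
    change (poch (1/2) n * poch (1/2) n / (poch 1 n * INR (fact n))) with (ac n);
    rewrite <- RtoC_pow; simpl; ring. }
  split; [|split; eexists; eassumption].
  rewrite Hv. unfold Ksqrt in Heq. rewrite Hh in Heq. unfold E.
  assert (Hc : RtoC (PI / 2) <> 0).
  { intro Hc. apply (f_equal fst) in Hc. simpl in Hc. pose proof PI_RGT_0. lra. }
  transitivity (/ RtoC (PI/2) * (RtoC (PI / 2) * s)). { field. exact Hc. }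
  rewrite <- Heq. field. exact Hc.
Qed.

Lemma rad_from_series (a : nat -> R) :
  ex_series (fun n => a n * (1/2) ^ n)%R -> Rbar_le (Finite (1/2)) (CV_radius a).
Proof.
  intros H. apply ex_series_lim_0 in H.
  destruct (filterlim_bounded (fun n => a n * (1/2) ^ n)%R) as [M HM].
  { exists 0%R. exact H. }
  destruct (CV_radius_bounded a) as [Hub _].
  apply Hub. exists M. intros n. apply HM.
Qed.

Lemma Rad_u p u : Hyp p u -> Rad u.
Proof.
  intros H. destruct (hyp_t p u (1/2) H) as [_ [H1 H2]].
  { rewrite Rabs_pos_eq; lra. }
  split; apply rad_from_series; auto.
Qed.

Lemma Mseq_zero p u : Hyp p u -> forall n, Mseq p u n = 0.
Proof.
  intros H.
  assert (Ru := Rad_u p u H).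
  assert (Hv : forall t, (Rabs t < 1/2)%R -> Val u t = E p t * Val ac t).
  { intros t Ht. apply (hyp_t p u t H). lra. }
  assert (Hm := main_rel p u ac Ru Rad_ac Hv).
  assert (RM : Rad (Mseq p u)) by radt.
  assert (Hz : forall t, (Rabs t < 1/2)%R -> Val (Mseq p u) t = 0).
  { intros t Ht. rewrite (Hm t Ht).
    assert (Val (Mseq 0 ac) t = 0).
    { unfold Val. rewrite (PSeries_ext _ (fun _ => 0%R)), (PSeries_ext (fun n => snd _) (fun _ => 0%R)).
      - rewrite PSeries_const_0. reflexivity.
      - intros n; rewrite Mseq0_ac; reflexivity.
      - intros n; rewrite Mseq0_ac; reflexivity. }
    rewrite H0. ring. }
  destruct RM as [R1 R2].
  intros n. apply injective_projections.
  - apply (PSeries_ext_recip (fun n => fst (Mseq p u n)) (fun _ => 0%R)).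
    + eapply Rbar_lt_le_trans; [|exact R1]. simpl. lra.
    + rewrite CV_radius_const_0. simpl. auto.
    + apply locball. { rewrite Rabs_R0. lra. }
      intros x Hx. rewrite PSeries_const_0. apply (f_equal fst) in Hz; [exact Hz| exact Hx] || (specialize (Hz x Hx); apply (f_equal fst) in Hz; exact Hz).
  - apply (PSeries_ext_recip (fun n => snd (Mseq p u n)) (fun _ => 0%R)).
    + eapply Rbar_lt_le_trans; [|exact R2]. simpl. lra.
    + rewrite CV_radius_const_0. simpl. auto.
    + apply locball. { rewrite Rabs_R0. lra. }
      intros x Hx. rewrite PSeries_const_0. specialize (Hz x Hx); apply (f_equal snd) in Hz; exact Hz.
Qed.

Lemma E0 p : E p 0 = 1.
Proof.
  unfold E, Cexp. apply injective_projections; simpl;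
  replace (fst p * 0 - snd p * 0)%R with 0%R by ring;
  replace (fst p * 0 + snd p * 0)%R with 0%R by ring;
  rewrite exp_0, ?cos_0, ?sin_0; ring.
Qed.

Theorem corollary4p1 (p : C) (u : nat -> C) :
  (forall z : C, (Cmod z < 1)%R ->
     exists s : C,
       is_series (V := C_NormedModule) (fun n => u n * z ^ n) s /\
       Cexp (p * z) * Ksqrt z = (PI / 2)%R * s) ->
  u 0%nat = 1 /\
  u 1%nat = (1/4) * (4 * p + 1) /\
  u 2%nat = (1/64) * (32 * p ^ 2 + 16 * p + 9) /\
  (forall n : nat, (2 <= n)%nat ->
     u (S n) =
       (2 * INR n + 1) * (2 * INR n + 4 * p + 1) / (4 * (INR n + 1) ^ 2) * u n
       - p * (2 * INR n + p) / ((INR n + 1) ^ 2) * u (n - 1)%nat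
       + p ^ 2 / ((INR n + 1) ^ 2) * u (n - 2)%nat).
Proof.
  intros H. fold (Hyp p u) in H.
  assert (Hz := Mseq_zero p u H).
  assert (U0 : u 0%nat = 1).
  { destruct (hyp_t p u 0 H) as [Hv _]. { rewrite Rabs_R0; lra. }
    rewrite !Val_0, E0, ac_0 in Hv. rewrite Hv. ring. }
  assert (U1 : u 1%nat = (1/4) * (4 * p + 1)).
  { assert (H0 := Hz 0%nat). cbv beta iota delta [Mseq Ws Vs lin Tc Dc] in H0.
    rewrite U0, INRS, INR0C in H0.
    apply Ceq_minus. rewrite <- H0. field. }
  assert (U2 : u 2%nat = (1/64) * (32 * p ^ 2 + 16 * p + 9)).
  { assert (H0 := Hz 1%nat). cbv beta iota delta [Mseq Ws Vs lin Tc Dc] in H0.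
    rewrite U0, U1, !INRS, INR0C in H0.
    apply Ceq_minus. transitivity (1/4 * 0); [|ring]. rewrite <- H0. field. }
  split; [exact U0|]. split; [exact U1|]. split; [exact U2|].
  intros n Hn. destruct n as [|[|m]]; [lia|lia|].
  replace (S (S m) - 1)%nat with (S m) by lia.
  replace (S (S m) - 2)%nat with m by lia.
  assert (H0 := Hz (S (S m))). cbv beta iota delta [Mseq Ws Vs lin Tc Dc] in H0.
  rewrite !INRS in H0. rewrite !INRS.
  pose proof (pos_INR m).
  apply Ceq_minus.
  transitivity (/ ((RtoC (INR m) + 1 + 1 + 1) ^ 2) * 0); [|ring].
  rewrite <- H0. field. cnz.
Qed.
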